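(* Let $f:\mathbb{R}^{n_x}\to\mathbb{R}^{n_x}$ be differentiable with Jacobian $F_x$, $L:\mathbb{R}^{n_x}\to\mathbb{R}^{n_x\times n_\beta}$, $Q$ an $n_\beta\times n_\beta$ diffusion matrix, $\overline{x}_a\in\mathbb{R}^{n_x}$, $P_a$ a covariance matrix, $\mu>0$, $\Delta t_k>0$. Let $m(t),P(t)$ solve $\frac{dm}{dt}=f(m)$, $\frac{dP}{dt}=PF_x^T(m)+F_x(m)P+L(m)QL^T(m)$ with $m(0)=\overline{x}_a$, $P(0)=P_a$, and take the conditional mean and covariance of a target born with time lag $t$ to be $\mathrm{E}[x_k|t]=m(t)$, $\mathrm{C}[x_k|t]=P(t)$. Let the lag $T$ have density $\frac{\mu}{1-e^{-\mu\Delta t_k}}e^{-\mu t}\chi_{[0,\Delta t_k)}(t)$ and define the mean and covariance at the time of birth by $\overline{x}_{b,k}=\mathrm{E}[\mathrm{E}[x_k|T]]$ and $P_{b,k}=\mathrm{C}[\mathrm{E}[x_k|T]]+\mathrm{E}[\mathrm{C}[x_k|T]]$. Then $$\overline{x}_{b,k}=\frac{\mu}{1-e^{-\mu\Delta t_k}}\overline{x}(\Delta t_k),\qquad P_{b,k}=\frac{\mu}{1-e^{-\mu\Delta t_k}}\Sigma(\Delta t_k)-\overline{x}_{b,k}\overline{x}_{b,k}^T,$$ where $\overline{x}(\cdot),\Sigma(\cdot)$ are obtained by solving jointly, from $t=0$ to $\Delta t_k$, the ODE system $\frac{dm}{dt}=f(m)$, $\frac{dP}{dt}=PF_x^T(m)+F_x(m)P+L(m)QL^T(m)$,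 $\frac{d\overline{x}}{dt}=m\,e^{-\mu t}$, $\frac{d\Sigma}{dt}=[P+mm^T]e^{-\mu t}$, with initial conditions $m(0)=\overline{x}_a$, $P(0)=P_a$, $\overline{x}(0)=0$, $\Sigma(0)=0$.
   Context: Setting: targets appear according to a Poisson process in time, with state distributed $\mathcal{N}(\overline{x}_a,P_a)$ at appearance, have exponential life spans with rate $\mu$, and move according to the nonlinear time-invariant SDE $dx=f(x)dt+L(x)d\beta$, with $\beta$ Brownian motion with diffusion matrix $Q$. The moment ODEs for $m,P$ result from the approximations $f(x)\approx f(m)+F_x(m)(x-m)$ and $L(x)\approx L(m)$. A target born at time step $k$ ($\Delta t_k=t_k-t_{k-1}$) appeared with lag $T\in[0,\Delta t_k)$ having the truncated exponential density above; $\chi_{[0,\Delta t_k)}$ is the indicator function. *)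

(* Defs.v *)
From HB Require Import structures.
From mathcomp Require Import all_boot all_order all_algebra.
From mathcomp Require Import all_classical all_reals all_analysis.
Set Implicit Arguments. Unset Strict Implicit. Unset Printing Implicit Defensive.
Import Order.TTheory GRing.Theory Num.Theory.
Import numFieldNormedType.Exports.
Local Open Scope classical_set_scope.
Local Open Scope ring_scope.

Definition jacobian_cV (R : realType) (n : nat) (f : 'cV[R]_n -> 'cV[R]_n)
  (x : 'cV[R]_n) : 'M[R]_n :=
  \matrix_(i, j) ('d f x (delta_mx j ord0) : 'cV[R]_n) i ord0.

Definition lag_density (R : realType) (mu dt t : R) : R :=
  mu / (1 - expR (- (mu * dt))) * expR (- (mu * t)).

Definition lag_mean (R : realType) (p q : nat) (mu dt : R)
  (g : R -> 'M[R]_(p, q)) : 'M[R]_(p, q) :=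
  \matrix_(i, j) Rintegral lebesgue_measure `[0, dt[
     (fun t => lag_density mu dt t * g t i j).

Definition birth_mean (R : realType) (n : nat) (mu dt : R)
  (m : R -> 'cV[R]_n) : 'cV[R]_n := lag_mean mu dt m.

Definition birth_cov (R : realType) (n : nat) (mu dt : R)
  (m : R -> 'cV[R]_n) (P : R -> 'M[R]_n) : 'M[R]_n :=
  let xb := birth_mean mu dt m in
  lag_mean mu dt (fun t => (m t - xb) *m (m t - xb)^T) + lag_mean mu dt P.

(* Main.v *)
Require Import Defs.
From HB Require Import structures.
From mathcomp Require Import all_boot all_order all_algebra.
From mathcomp Require Import all_classical all_reals all_analysis.
From mathcomp Require Import ring lra.
Import Order.TTheory GRing.Theory Num.Theory.
Import numFieldNormedType.Exports.
Local Open Scope classical_set_scope.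
Local Open Scope ring_scope.

Section H.
Context {R : realType}.

Lemma within_coord (A : set R) p q (M : R -> 'M[R]_(p,q)) i j :
  {within A, continuous M} -> {within A, continuous (fun t => M t i j)}.
Proof.
move=> hM x; exact: (@continuous_comp (subspace A) _ _ M (fun N : 'M[R]_(p,q) => N i j) x (hM x) (@coord_continuous _ _ _ _ _ _)).
Qed.

Lemma is_derive_coord p q (M : R -> 'M[R]_(p,q)) t D i j :
  is_derive t (1:R) M D -> is_derive t (1:R) (fun x => M x i j) (D i j).
Proof.
move=> hD.
have dM : derivable M t 1 by case: hD.
have dij := (derivable_mxP M t 1).1 dM i j.
apply: DeriveDef => //.
by case: hD => _ <-; rewrite derive_mx // mxE.
Qed.

Lemma is_derive_expN (mu t : R) :
  is_derive t (1:R) (fun s => expR (- (mu * s))) (- mu * expR (- (mu * t))).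
Proof.
have -> : (fun s => expR (- (mu * s))) = expR \o (fun s : R => (- mu) * s).
  by apply/funext => s /=; rewrite mulNr.
have h1 : is_derive t (1:R) (fun s : R => (- mu) * s) (- mu).
  have := is_deriveZ (- mu) (is_derive_id t (1:R)).
  by rewrite /GRing.scale /= mulr1.
have d1 : derivable (fun s : R => (- mu) * s) t 1 by case: h1.
have d2 : derivable expR (- mu * t) 1 by case: (is_derive_expR (- mu * t)).
apply: DeriveDef.
  by apply/derivable1_diffP; apply: differentiable_comp; apply/derivable1_diffP.
rewrite -derive1E derive1_comp //.
rewrite !derive1E; case: h1 => _ ->; case: (is_derive_expR (- mu * t)) => _ ->.
by rewrite mulNr mulrC.
Qed.

Lemma ftc (a b : R) (g F : R -> R) : a < b ->
  {within `[a, b], continuous g} -> {within `[a, b], continuous F} ->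
  (forall t, a < t < b -> is_derive t (1:R) F (g t)) ->
  Rintegral lebesgue_measure `[a, b[ g = F b - F a.
Proof.
move=> ab cg cF dF.
have ig : lebesgue_measure.-integrable `[a, b] (EFin \o g).
  by apply: continuous_compact_integrable => //; exact: segment_compact.
rewrite Rintegral_itv_bndo_bndc; last first.
  apply: integrableS ig => //; apply: subset_itvl; by rewrite bnd_simp.
have [_ Fa Fb] := (continuous_within_itvP _ ab).1 cF.
rewrite /Rintegral (@continuous_FTC2 R g F a b ab cg).
- by rewrite -EFinB.
- split => //; move=> x; rewrite in_itv/= => hx; by case: (dF x hx).
- by move=> x; rewrite in_itv/= => hx; rewrite derive1E; case: (dF x hx).
Qed.

Section W.
Variable A : set R.
Implicit Types f g : R -> R.
Lemma wC (k : R) : {within A, continuous (fun _ : R => k)}.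
Proof. by apply: continuous_subspaceT => x; exact: cst_continuous. Qed.
Lemma wM f g : {within A, continuous f} -> {within A, continuous g} ->
  {within A, continuous (fun t => f t * g t)}.
Proof. by move=> hf hg x; exact: continuousM (hf x) (hg x). Qed.
Lemma wD f g : {within A, continuous f} -> {within A, continuous g} ->
  {within A, continuous (fun t => f t + g t)}.
Proof. by move=> hf hg x; exact: continuousD (hf x) (hg x). Qed.
Lemma wB f g : {within A, continuous f} -> {within A, continuous g} ->
  {within A, continuous (fun t => f t - g t)}.
Proof. by move=> hf hg x; exact: continuousB (hf x) (hg x). Qed.
Lemma wE mu : {within A, continuous (fun s => expR (- (mu * s)))}.
Proof.
apply: continuous_subspaceT => x; apply: differentiable_continuous.
apply/derivable1_diffP; by case: (is_derive_expN mu x).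
Qed.
End W.

Lemma dB (f g : R -> R) (t df dg : R) : is_derive t (1:R) f df -> is_derive t (1:R) g dg ->
  is_derive t (1:R) (fun x => f x - g x) (df - dg).
Proof. move=> h1 h2; exact: is_deriveB. Qed.
Lemma dD (f g : R -> R) (t df dg : R) : is_derive t (1:R) f df -> is_derive t (1:R) g dg ->
  is_derive t (1:R) (fun x => f x + g x) (df + dg).
Proof. move=> h1 h2; exact: is_deriveD. Qed.
Lemma dZ (k : R) (f : R -> R) (t df : R) : is_derive t (1:R) f df ->
  is_derive t (1:R) (fun x => k * f x) (k * df).
Proof. move=> h1; exact: is_deriveZ. Qed.

Lemma cont_int (a b : R) g : {within `[a, b], continuous g} ->
  lebesgue_measure.-integrable `[a, b[ (EFin \o g).
Proof.
move=> cg.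
have ig : lebesgue_measure.-integrable `[a, b] (EFin \o g).
  by apply: continuous_compact_integrable => //; exact: segment_compact.
by apply: integrableS ig => //; apply: subset_itvl; rewrite bnd_simp.
Qed.

End H.
Arguments dZ {R} k {f t df}.
Arguments dB {R f g t df dg}.
Arguments dD {R f g t df dg}.

Theorem proposition8 (R : realType) (nx nb : nat)
  (f : 'cV[R]_nx -> 'cV[R]_nx) (L : 'cV[R]_nx -> 'M[R]_(nx, nb))
  (Q : 'M[R]_nb) (xa : 'cV[R]_nx) (Pa : 'M[R]_nx) (mu dt : R)
  (m : R -> 'cV[R]_nx) (P : R -> 'M[R]_nx)
  (xbar : R -> 'cV[R]_nx) (Sig : R -> 'M[R]_nx) :
  (forall x, differentiable f x) ->
  Q^T = Q -> (forall v : 'cV[R]_nb, 0 <= (v^T *m Q *m v) ord0 ord0) ->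
  Pa^T = Pa -> (forall v : 'cV[R]_nx, 0 <= (v^T *m Pa *m v) ord0 ord0) ->
  0 < mu -> 0 < dt ->
  (* m, P solve the moment ODEs on [0, dt] *)
  {within `[0, dt], continuous m} -> {within `[0, dt], continuous P} ->
  (forall t : R, 0 < t < dt -> is_derive t (1 : R) m (f (m t))) ->
  (forall t : R, 0 < t < dt -> is_derive t (1 : R) P
     (P t *m (jacobian_cV f (m t))^T + jacobian_cV f (m t) *m P t
      + L (m t) *m Q *m (L (m t))^T)) ->
  m 0 = xa -> P 0 = Pa ->
  (* xbar, Sig solve the augmented ODEs on [0, dt] *)
  {within `[0, dt], continuous xbar} -> {within `[0, dt], continuous Sig} ->
  (forall t : R, 0 < t < dt -> is_derive t (1 : R) xbar (expR (- (mu * t)) *: m t)) ->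
  (forall t : R, 0 < t < dt -> is_derive t (1 : R) Sig
     (expR (- (mu * t)) *: (P t + m t *m (m t)^T))) ->
  xbar 0 = 0 -> Sig 0 = 0 ->
  birth_mean mu dt m = (mu / (1 - expR (- (mu * dt)))) *: xbar dt /\
  birth_cov mu dt m P =
    (mu / (1 - expR (- (mu * dt)))) *: Sig dt
    - birth_mean mu dt m *m (birth_mean mu dt m)^T.

Proof.
move=> _ _ _ _ _ mu0 dt0 cm cP dm dP m0 P0 cx cS dx dS x0 S0.
set c := mu / (1 - expR (- (mu * dt))).
have e1 : expR (- (mu * dt)) < 1 by rewrite expR_lt1 oppr_lt0 mulr_gt0.
have hc : c / mu * (expR (- (mu * dt)) - 1) = -1.
  rewrite /c; field; apply/andP; split; first by rewrite gt_eqF.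
  by rewrite subr_eq0 eq_sym lt_eqF.
have hb : birth_mean mu dt m = c *: xbar dt.
  apply/matrixP => i j; rewrite !mxE.
  have c1 : {within `[0, dt], continuous (fun t => lag_density mu dt t * m t i j)}.
    rewrite /lag_density.
    apply: wM; [apply: wM; [exact: wC | exact: wE] | exact: within_coord].
  have c2 : {within `[0, dt], continuous (fun t => c * xbar t i j)}.
    apply: wM; [exact: wC | exact: within_coord].
  have d1 : forall t, 0 < t < dt -> is_derive t (1:R) (fun t => c * xbar t i j)
      (lag_density mu dt t * m t i j).
    move=> t ht; apply: is_derive_eq; first exact: dZ (@is_derive_coord R _ _ _ _ _ i j (dx t ht)).
    by rewrite mxE /lag_density mulrA.
  rewrite (@ftc R 0 dt _ _ dt0 c1 c2 d1).
  by rewrite x0 mxE mulr0 subr0.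
split => //.
rewrite /birth_cov hb /=.
apply/matrixP => i j; rewrite !mxE.
set xi := c * xbar dt i ord0; set xj := c * xbar dt j ord0.
have E1 : (fun t => lag_density mu dt t * ((m t - c *: xbar dt) *m (m t - c *: xbar dt)^T) i j)
  = (fun t => lag_density mu dt t * ((m t i ord0 - xi) * (m t j ord0 - xj))).
  by apply/funext => t; rewrite !mxE big_ord1 !mxE.
rewrite E1.
have cl : {within `[0, dt], continuous (lag_density mu dt)}.
  by rewrite /lag_density; apply: wM; [exact: wC | exact: wE].
have g1 : {within `[0, dt], continuous
    (fun t => lag_density mu dt t * ((m t i ord0 - xi) * (m t j ord0 - xj)))}.
  apply: wM => //; apply: wM; (apply: wB; [exact: within_coord | exact: wC]).
have g2 : {within `[0, dt], continuous (fun t => lag_density mu dt t * P t i j)}.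
  by apply: wM => //; exact: within_coord.
rewrite -RintegralD //; [| exact: cont_int g1 | exact: cont_int g2].
set K := xi * xj * (c / mu).
have cF : {within `[0, dt], continuous (fun t => c * Sig t i j - xj * (c * xbar t i ord0)
   - xi * (c * xbar t j ord0) - K * expR (- (mu * t)))}.
  apply: wB; [apply: wB; [apply: wB|]|].
  - apply: wM; [exact: wC | exact: within_coord].
  - apply: wM; [exact: wC | apply: wM; [exact: wC | exact: within_coord]].
  - apply: wM; [exact: wC | apply: wM; [exact: wC | exact: within_coord]].
  - apply: wM; [exact: wC | exact: wE].
have cg : {within `[0, dt], continuous (fun t => lag_density mu dt t * ((m t i ord0 - xi) * (m t j ord0 - xj)) + lag_density mu dt t * P t i j)}.
  exact: wD.
have dF : forall t, 0 < t < dt -> is_derive t (1:R) (fun t => c * Sig t i j - xj * (c * xbar t i ord0)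
   - xi * (c * xbar t j ord0) - K * expR (- (mu * t)))
   (lag_density mu dt t * ((m t i ord0 - xi) * (m t j ord0 - xj)) + lag_density mu dt t * P t i j).
  move=> t ht.
  have h1 := @is_derive_coord R _ _ _ _ _ i j (dS t ht).
  have h2 := @is_derive_coord R _ _ _ _ _ i ord0 (dx t ht).
  have h3 := @is_derive_coord R _ _ _ _ _ j ord0 (dx t ht).
  have hh := dB (dB (dB (dZ c h1) (dZ xj (dZ c h2))) (dZ xi (dZ c h3))) (dZ K (is_derive_expN mu t)).
  apply: (is_derive_eq hh).
  rewrite !mxE big_ord1 !mxE /lag_density -/c /K.
  field; by rewrite gt_eqF.
rewrite (@ftc R 0 dt _ _ dt0 cg cF dF).
rewrite S0 x0 !mxE big_ord1 !mxE -/xi -/xj.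
rewrite [mu * 0]mulr0 oppr0 expR0.
transitivity (c * Sig dt i j - 2 * (xi * xj) - xi * xj * (c / mu * (expR (- (mu * dt)) - 1))).
  by rewrite /K; ring.
by rewrite hc; ring.
Qed.
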